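(* Let $B$ be a skew left brace and let $I/J$ be a chief factor of $B$ which is an abelian brace. Then $I/J$ is either a Frattini chief factor or a complemented chief factor of $B$. If moreover $B$ is finite, then every complement of $I/J$ in $B/J$ is a maximal subbrace of $B/J$.
   Context: A skew left brace (brace) is a set $B$ with two group structures $(B,+)$ and $(B,\cdot)$ with $a(b+c)=ab-a+ac$; $\lambda_a(b)=-a+ab$. A subbrace is a subset that is a subgroup of both groups; a maximal subbrace is a proper subbrace not contained in any other proper subbrace. An ideal is a subset that is a normal subgroup of both groups and $\lambda_b$-invariant for all $b$. A brace is abelian if $xy=x+y=y+x$ for all elements. For ideals $J\subseteq I$, $I/J$ is a chief factor if it is a minimal nonzero ideal of $B/J$. The Frattini subbrace $\Phi(B)$ is the intersection of all maximal subbraces of $B$ (or $B$ if there are none). $I/J$ is a Frattini chief factor if $I/J\subseteq\Phi(B/J)$, and a complemented chief factor if there is a subbrace $T$ of $B/J$ (a complement) with $B/J=(I/J)T=(I/J)+T$ and $(I/J)\cap T=0$. *)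

(* Defs.v *)
From Stdlib Require Import List.

Record skew_brace := SkewBrace {
  carrier :> Type;
  badd : carrier -> carrier -> carrier;
  bopp : carrier -> carrier;
  bzero : carrier;
  bmul : carrier -> carrier -> carrier;
  binv : carrier -> carrier;
  bone : carrier;
  baddA : forall a b c, badd a (badd b c) = badd (badd a b) c;
  badd0l : forall a, badd bzero a = a;
  badd0r : forall a, badd a bzero = a;
  baddNl : forall a, badd (bopp a) a = bzero;
  baddNr : forall a, badd a (bopp a) = bzero;
  bmulA : forall a b c, bmul a (bmul b c) = bmul (bmul a b) c;
  bmul1l : forall a, bmul bone a = a;
  bmul1r : forall a, bmul a bone = a;
  bmulVl : forall a, bmul (binv a) a = bone;
  bmulVr : forall a, bmul a (binv a) = bone;
  bbrace : forall a b c, bmul a (badd b c) = badd (bmul a b) (badd (bopp a) (bmul a c))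
}.

Arguments badd {s}. Arguments bopp {s}. Arguments bzero {s}.
Arguments bmul {s}. Arguments binv {s}. Arguments bone {s}.

Section BraceDefs.
Variable B : skew_brace.

Definition blambda (a b : B) : B := badd (bopp a) (bmul a b).

Definition bset := B -> Prop.

Definition subset (S T : bset) : Prop := forall x, S x -> T x.
Definition set_eq (S T : bset) : Prop := forall x, S x <-> T x.

Definition add_subgroup (S : bset) : Prop :=
  S bzero /\ (forall x y, S x -> S y -> S (badd x y)) /\ (forall x, S x -> S (bopp x)).
Definition mul_subgroup (S : bset) : Prop :=
  S bone /\ (forall x y, S x -> S y -> S (bmul x y)) /\ (forall x, S x -> S (binv x)).

Definition subbrace (S : bset) : Prop := add_subgroup S /\ mul_subgroup S.

Definition proper (S : bset) : Prop := exists x, ~ S x.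

Definition maximal_subbrace (M : bset) : Prop :=
  subbrace M /\ proper M /\
  forall S, subbrace S -> proper S -> subset M S -> set_eq S M.

Definition ideal (S : bset) : Prop :=
  add_subgroup S /\ mul_subgroup S /\
  (forall a x, S x -> S (badd (badd a x) (bopp a))) /\
  (forall a x, S x -> S (bmul (bmul a x) (binv a))) /\
  (forall b x, S x -> S (blambda b x)).

Definition abelian_subbrace (S : bset) : Prop :=
  subbrace S /\
  forall x y, S x -> S y -> bmul x y = badd x y /\ badd x y = badd y x.

Definition minimal_ideal (N : bset) : Prop :=
  ideal N /\ (exists x, N x /\ x <> bzero) /\
  forall K, ideal K -> subset K N -> set_eq K (fun x => x = bzero) \/ set_eq K N.

(* Frattini subbrace: intersection of all maximal subbraces
   (the whole brace if there are none) *)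
Definition frattini (x : B) : Prop := forall M, maximal_subbrace M -> M x.

Definition complement (N T : bset) : Prop :=
  subbrace T /\
  (forall x, exists n t, N n /\ T t /\ x = bmul n t) /\
  (forall x, exists n t, N n /\ T t /\ x = badd n t) /\
  (forall x, N x -> T x -> x = bzero).

Definition finite_brace : Prop := exists l : list B, forall x, In x l.

End BraceDefs.

Arguments subset {B}. Arguments set_eq {B}. Arguments subbrace {B}.
Arguments maximal_subbrace {B}. Arguments ideal {B}. Arguments abelian_subbrace {B}.
Arguments minimal_ideal {B}. Arguments frattini {B}. Arguments complement {B}.

Definition brace_hom (B Q : skew_brace) (f : B -> Q) : Prop :=
  (forall a b, f (badd a b) = badd (f a) (f b)) /\
  (forall a b, f (bmul a b) = bmul (f a) (f b)).

Definition surjective {X Y : Type} (f : X -> Y) : Prop := forall y, exists x, f x = y.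

Definition image {B Q : skew_brace} (f : B -> Q) (S : bset B) : bset Q :=
  fun y => exists x, S x /\ f x = y.

(* Q together with pi : B ->> Q is a model of the quotient brace B/J:
   pi is a surjective brace homomorphism with kernel exactly J. *)
Definition quotient_map (B Q : skew_brace) (J : bset B) (pi : B -> Q) : Prop :=
  brace_hom B Q pi /\ surjective pi /\ forall x, J x <-> pi x = bzero.

(* Main.v *)
Require Import Defs.
From Stdlib Require Import Classical.

Section G.
Variable B : skew_brace.

Lemma addKl (a b : B) : badd (bopp a) (badd a b) = b.
Proof. rewrite baddA, baddNl, badd0l. reflexivity. Qed.
Lemma addNKl (a b : B) : badd a (badd (bopp a) b) = b.
Proof. rewrite baddA, baddNr, badd0l. reflexivity. Qed.
Lemma add_canc (a b c : B) : badd a b = badd a c -> b = c.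
Proof. intro H. rewrite <- (addKl a b), <- (addKl a c), H. reflexivity. Qed.
Lemma oppK (a : B) : bopp (bopp a) = a.
Proof. apply (add_canc (bopp a)). rewrite baddNr, baddNl. reflexivity. Qed.
Lemma oppD (a b : B) : bopp (badd a b) = badd (bopp b) (bopp a).
Proof. apply (add_canc (badd a b)). rewrite baddNr.
  rewrite baddA, <- (baddA _ a b), baddNr, badd0r, baddNr. reflexivity. Qed.
Lemma opp0 : bopp (@bzero B) = bzero.
Proof. rewrite <- (badd0r _ (bopp bzero)). apply baddNl. Qed.

Lemma mulKl (a b : B) : bmul (binv a) (bmul a b) = b.
Proof. rewrite bmulA, bmulVl, bmul1l. reflexivity. Qed.
Lemma mul_canc (a b c : B) : bmul a b = bmul a c -> b = c.
Proof. intro H. rewrite <- (mulKl a b), <- (mulKl a c), H. reflexivity. Qed.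
Lemma invK (a : B) : binv (binv a) = a.
Proof. apply (mul_canc (binv a)). rewrite bmulVr, bmulVl. reflexivity. Qed.
Lemma invM (a b : B) : binv (bmul a b) = bmul (binv b) (binv a).
Proof. apply (mul_canc (bmul a b)). rewrite bmulVr.
  rewrite bmulA, <- (bmulA _ a b), bmulVr, bmul1r, bmulVr. reflexivity. Qed.

Lemma mul0r (a : B) : bmul a bzero = a.
Proof.
  pose proof (bbrace B a bzero bzero) as H. rewrite badd0l in H.
  assert (H2: badd (bopp a) (bmul a bzero) = bzero).
  { apply (add_canc (bmul a bzero)). rewrite badd0r. symmetry. exact H. }
  rewrite <- (addNKl a (bmul a bzero)), H2, badd0r. reflexivity. Qed.

Lemma one_zero : (@bone B) = bzero.
Proof. transitivity (bmul (@bone B) bzero). symmetry; apply mul0r. apply bmul1l. Qed.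

Lemma lam_comp (a b x : B) : blambda B a (blambda B b x) = blambda B (bmul a b) x.
Proof.
  unfold blambda. rewrite bbrace.
  assert (H: badd (bopp a) (bmul a (bopp b)) = badd (bopp (bmul a b)) a).
  { pose proof (bbrace B a b (bopp b)) as H'. rewrite baddNr, mul0r in H'.
    rewrite <- (addKl (bmul a b) (badd (bopp a) (bmul a (bopp b)))), <- H'. reflexivity. }
  rewrite baddA, H, bmulA, <- baddA, addNKl. reflexivity.
Qed.

Lemma lam1 (y : B) : blambda B bone y = y.
Proof. unfold blambda. rewrite bmul1l, one_zero, opp0, badd0l. reflexivity. Qed.

Lemma mul_lam (a b : B) : bmul a b = badd a (blambda B a b).
Proof. unfold blambda. rewrite addNKl. reflexivity. Qed.

Lemma decomp_equiv (N M : bset B) : ideal N -> subbrace M -> forall x,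
 (exists n m, N n /\ M m /\ x = bmul n m) <-> (exists n m, N n /\ M m /\ x = badd n m).
Proof.
  intros [[N0 [NA NO]] [[N1 [NM NI]] [NCa [NCm NL]]]] [[M0 [MA MO]] [M1 [MM MI]]] x.
  split.
  - intros [n [m [Hn [Hm ->]]]].
    pose (n' := bmul (bmul (binv m) n) (binv (binv m))).
    assert (Hn' : N n') by (apply NCm; exact Hn).
    assert (E : bmul m n' = bmul n m).
    { unfold n'. rewrite invK, !bmulA, bmulVr, bmul1l. reflexivity. }
    exists (badd (badd m (blambda B m n')) (bopp m)), m.
    split. apply NCa, NL, Hn'. split. exact Hm.
    rewrite <- baddA, baddNl, badd0r, <- mul_lam, E. reflexivity.
  - intros [n [m [Hn [Hm ->]]]].
    pose (n1 := badd (badd (bopp m) n) (bopp (bopp m))).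
    assert (Hn1 : N n1) by (apply NCa; exact Hn).
    pose (n2 := blambda B (binv m) n1).
    assert (Hn2 : N n2) by (apply NL; exact Hn1).
    exists (bmul (bmul m n2) (binv m)), m.
    split. apply NCm, Hn2. split. exact Hm.
    rewrite <- bmulA, bmulVl, bmul1r, mul_lam. unfold n2.
    rewrite lam_comp, bmulVr, lam1. unfold n1.
    rewrite oppK, !baddA, baddNr, badd0l. reflexivity.
Qed.

Lemma NM_subbrace (N M : bset B) : ideal N -> subbrace M ->
  subbrace (fun x => exists n m, N n /\ M m /\ x = bmul n m).
Proof.
  intros hN hM.
  pose proof (decomp_equiv N M hN hM) as D.
  destruct hN as [[N0 [NA NO]] [[N1 [NM NI]] [NCa [NCm NL]]]].
  destruct hM as [[M0 [MA MO]] [M1 [MM MI]]].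
  split; [split; [|split] | split; [|split]].
  - apply D. exists bzero, bzero. rewrite badd0l. auto.
  - intros x y Hx Hy. apply D in Hx. apply D in Hy. apply D.
    destruct Hx as [n1 [m1 [Hn1 [Hm1 ->]]]]. destruct Hy as [n2 [m2 [Hn2 [Hm2 ->]]]].
    exists (badd n1 (badd (badd m1 n2) (bopp m1))), (badd m1 m2).
    split. apply NA. exact Hn1. apply NCa, Hn2. split. apply MA; assumption.
    rewrite !baddA, <- (baddA _ _ (bopp m1) m1), baddNl, badd0r. reflexivity.
  - intros x Hx. apply D in Hx. apply D.
    destruct Hx as [n [m [Hn [Hm ->]]]].
    exists (badd (badd (bopp m) (bopp n)) (bopp (bopp m))), (bopp m).
    split. apply NCa, NO, Hn. split. apply MO, Hm.
    rewrite oppK, oppD, <- baddA, baddNr, badd0r. reflexivity.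
  - exists bone, bone. rewrite bmul1l. auto.
  - intros x y [n1 [m1 [Hn1 [Hm1 ->]]]] [n2 [m2 [Hn2 [Hm2 ->]]]].
    exists (bmul n1 (bmul (bmul m1 n2) (binv m1))), (bmul m1 m2).
    split. apply NM. exact Hn1. apply NCm, Hn2. split. apply MM; assumption.
    rewrite !bmulA, <- (bmulA _ _ (binv m1) m1), bmulVl, bmul1r. reflexivity.
  - intros x [n [m [Hn [Hm ->]]]].
    exists (bmul (bmul (binv m) (binv n)) (binv (binv m))), (binv m).
    split. apply NCm, NI, Hn. split. apply MI, Hm.
    rewrite invK, invM, <- bmulA, bmulVr, bmul1r. reflexivity.
Qed.

Lemma inter_ideal (N M : bset B) : ideal N -> abelian_subbrace N -> subbrace M ->
  (forall x, exists n m, N n /\ M m /\ x = bmul n m) ->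
  (forall x, exists n m, N n /\ M m /\ x = badd n m) ->
  ideal (fun x => N x /\ M x).
Proof.
  intros hN [_ hab] hM DM DA.
  destruct hN as [[N0 [NA NO]] [[N1 [NM NI]] [NCa [NCm NL]]]].
  destruct hM as [[M0 [MA MO]] [M1 [MM MI]]].
  assert (mc : forall x y, N x -> N y -> bmul x y = bmul y x).
  { intros x y Hx Hy. destruct (hab x y Hx Hy) as [E1 E2].
    destruct (hab y x Hy Hx) as [E3 _]. rewrite E1, E2, E3. reflexivity. }
  split; [|split; [|split; [|split]]].
  - split; [|split]. split; auto. intros x y [] []; split; auto. intros x []; split; auto.
  - split; [|split]. split; auto. intros x y [] []; split; auto. intros x []; split; auto.
  - intros a x [Hx Mx]. destruct (DA a) as [n [m [Hn [Hm ->]]]].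
    pose (y := badd (badd m x) (bopp m)).
    assert (Ny : N y) by (apply NCa; exact Hx).
    assert (My : M y) by (apply MA; [apply MA|apply MO]; assumption).
    replace (badd (badd (badd n m) x) (bopp (badd n m))) with (badd (badd n y) (bopp n)).
    + destruct (hab n y Hn Ny) as [_ E]. rewrite E, <- baddA, baddNr, badd0r. auto.
    + unfold y. rewrite oppD, !baddA. reflexivity.
  - intros a x [Hx Mx]. destruct (DM a) as [n [m [Hn [Hm ->]]]].
    pose (y := bmul (bmul m x) (binv m)).
    assert (Ny : N y) by (apply NCm; exact Hx).
    assert (My : M y) by (apply MM; [apply MM|apply MI]; assumption).
    replace (bmul (bmul (bmul n m) x) (binv (bmul n m))) with (bmul (bmul n y) (binv n)).
    + rewrite (mc n y Hn Ny), <- bmulA, bmulVr, bmul1r. auto.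
    + unfold y. rewrite invM, !bmulA. reflexivity.
  - intros b x [Hx Mx]. destruct (DM b) as [n [m [Hn [Hm ->]]]].
    rewrite <- lam_comp.
    pose (y := blambda B m x).
    assert (Ny : N y) by (apply NL; exact Hx).
    assert (My : M y) by (apply MA; [apply MO|apply MM]; assumption).
    fold y. destruct (hab n y Hn Ny) as [E _].
    assert (Ey : blambda B n y = y) by (unfold blambda; rewrite E, addKl; reflexivity).
    rewrite Ey. split; auto.
Qed.

Theorem gen (N : bset B) (hN : minimal_ideal N) (hab : abelian_subbrace N) :
 (subset N frattini \/ exists T, complement N T) /\
 (forall T, complement N T -> maximal_subbrace T).
Proof.
  destruct hN as [hNi [[x0 [Nx0 x0nz]] hmin]].
  split.
  - destruct (classic (subset N frattini)) as [H|H]. left; exact H. right.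
    apply not_all_ex_not in H. destruct H as [x Hx].
    apply imply_to_and in Hx. destruct Hx as [Nx Fx].
    unfold frattini in Fx. apply not_all_ex_not in Fx. destruct Fx as [M HM].
    apply imply_to_and in HM. destruct HM as [Mmax Mx].
    exists M.
    pose proof Mmax as [Msub [Mprop Mm]].
    set (S := fun y => exists n m, N n /\ M m /\ y = bmul n m).
    assert (Ssub : subbrace S) by (apply NM_subbrace; assumption).
    assert (Sall : forall y, S y).
    { intro y. apply NNPP. intro Hy.
      assert (HSM : set_eq S M).
      { apply Mm. exact Ssub. exists y; exact Hy.
        intros z Hz. exists bone, z. split. apply hNi. split. exact Hz.
        rewrite bmul1l; reflexivity. }
      apply Mx, HSM. exists x, bone. split. exact Nx. split. apply Msub.
      rewrite bmul1r; reflexivity. }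
    assert (DA : forall y, exists n m, N n /\ M m /\ y = badd n m).
    { intro y. apply (decomp_equiv N M hNi Msub). apply Sall. }
    split. exact Msub. split. exact Sall. split. exact DA.
    assert (K := inter_ideal N M hNi hab Msub Sall DA).
    destruct (hmin _ K (fun z Hz => proj1 Hz)) as [H0|HN].
    + intros z Nz Mz. apply H0. auto.
    + exfalso. apply Mx. apply HN. exact Nx.
  - intros T [Tsub [DMt [DAt Tdis]]].
    split. exact Tsub. split.
    { exists x0. intro Tx0. apply x0nz, Tdis; assumption. }
    intros S Ssub Sprop TS.
    assert (DM : forall y, exists n m, N n /\ S m /\ y = bmul n m).
    { intro y. destruct (DMt y) as [n [m [? [? ?]]]]. exists n, m. auto. }
    assert (DA : forall y, exists n m, N n /\ S m /\ y = badd n m).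
    { intro y. destruct (DAt y) as [n [m [? [? ?]]]]. exists n, m. auto. }
    assert (K := inter_ideal N S hNi hab Ssub DM DA).
    destruct Ssub as [Sadd [S1 [SM SI]]].
    destruct (hmin _ K (fun z Hz => proj1 Hz)) as [H0|HN].
    + intro y. split; [|apply TS].
      intro Sy. destruct (DMt y) as [n [t [Nn [Tt E]]]].
      assert (Sn : S n).
      { replace n with (bmul y (binv t)). apply SM. exact Sy. apply SI, TS, Tt.
        rewrite E, <- bmulA, bmulVr, bmul1r. reflexivity. }
      assert (n = bzero) by (apply H0; auto).
      subst. rewrite <- one_zero, bmul1l. exact Tt.
    + exfalso. destruct Sprop as [y Hy]. apply Hy.
      destruct (DMt y) as [n [t [Nn [Tt ->]]]].
      apply SM. apply HN, Nn. apply TS, Tt.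
Qed.

End G.

Theorem lemma4p12 (B : skew_brace) (I J : bset B)
  (hI : ideal I) (hJ : ideal J) (hJI : subset J I)
  (Q : skew_brace) (pi : B -> Q) (hpi : quotient_map B Q J pi)
  (hchief : minimal_ideal (image pi I))
  (habel : abelian_subbrace (image pi I)) :
  (subset (image pi I) frattini \/ exists T, complement (image pi I) T) /\
  (finite_brace B -> forall T, complement (image pi I) T -> maximal_subbrace T).
Proof.
  destruct (gen Q (image pi I) hchief habel) as [H1 H2].
  split. exact H1. intros _. exact H2.
Qed.
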